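(* Let $A=A^T\in\mathbb{R}^{n\times n}$, let $s$ be an integer with $1\leq s<d(A)$, and let $v_0\in\mathbb{R}^n$ with $\|v_0\|=1$ and $d(A,v_0)\geq s+1$. Consider the iteration $\widetilde v_{k+1}=P_s(A;v_k)v_k$, $v_{k+1}=\widetilde v_{k+1}/\|\widetilde v_{k+1}\|$, $k=0,1,2,\dots$, and let $\tau:=\lim_{k\to\infty}\|\widetilde v_k\|$ (this limit exists and is positive). Then every limit vector $v_*$ of the subsequence $\{v_{2k}\}$ satisfies $$(Q(A)-\tau^2 I)v_*=0,\qquad\text{where } Q(z):=P_s(z;w_* )\,P_s(z;v_* ),\quad w_*:=\frac{P_s(A;v_* )v_*}{\tau},$$ and in particular $s<d(A,v_* )\leq 2s$.
   Context: $d(A)$ is the degree of the minimal polynomial of $A$; $d(A,v)$ is the grade of $v$ w.r.t. $A$ (degree of the monic polynomial $p$ of smallest degree with $p(A)v=0$); $\mathcal{K}_k(A,v)=\mathrm{span}\{v,Av,\dots,A^{k-1}v\}$; $\mathcal{M}_s$ is the set of real monic polynomials of degree $s$; $\|\cdot\|$ is the Euclidean norm. For $v$ with $d(A,v)\geq s$, $P_s(\cdot\,;v)\in\mathcal{M}_s$ denotes the unique monic polynomial of degree $s$ such that $P_s(A;v)v\perp\mathcal{K}_s(A,v)$. (Under the hypotheses all $\widetilde v_k$ are nonzero, the sequence $\|\widetilde v_k\|$ is nondecreasing and bounded, and every limit vector $v_*$ has $d(A,v_* )\geq s+1$, $\|P_s(A;v_* )v_*\|=\tau$ and $d(A,w_*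 )\geq s$, so $Q$ is well defined.) *)

(* Defs.v *)
From HB Require Import structures.
From mathcomp Require Import all_boot all_order all_algebra.
From mathcomp Require Import all_classical all_reals all_analysis.
Set Implicit Arguments. Unset Strict Implicit. Unset Printing Implicit Defensive.
Import Order.TTheory GRing.Theory Num.Theory.
Local Open Scope ring_scope.

Section Defs.
Variables (R : realType) (n' : nat).
Local Notation n := n'.+1.

Definition dotv (u v : 'cV[R]_n) : R := \sum_i u i 0 * v i 0.
Definition enorm (v : 'cV[R]_n) : R := Num.sqrt (dotv v v).

Definition pAv (A : 'M[R]_n) (p : {poly R}) (v : 'cV[R]_n) : 'cV[R]_n :=
  horner_mx A p *m v.

Definition dmin (A : 'M[R]_n) : nat := (size (mxminpoly A)).-1.

Definition annih_deg (A : 'M[R]_n) (v : 'cV[R]_n) (k : nat) : bool :=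
  `[< exists p : {poly R}, [/\ p \is monic, size p = k.+1 & pAv A p v = 0] >].

Lemma annih_deg_ex (A : 'M[R]_n) (v : 'cV[R]_n) : exists k, annih_deg A v k.
Proof.
exists (size (mxminpoly A)).-1; apply/asboolP; exists (mxminpoly A); split.
- exact: mxminpoly_monic.
- by rewrite size_mxminpoly.
- by rewrite /pAv mx_root_minpoly mul0mx.
Qed.

Definition grade (A : 'M[R]_n) (v : 'cV[R]_n) : nat := ex_minn (annih_deg_ex A v).

(* p = P_s(. ; v): monic of degree s with p(A) v orthogonal to K_s(A,v) *)
Definition is_Ps (A : 'M[R]_n) (s : nat) (v : 'cV[R]_n) (p : {poly R}) : Prop :=
  [/\ p \is monic, size p = s.+1 &
      forall j : nat, (j < s)%N -> dotv (A ^+ j *m v) (pAv A p v) = 0].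

End Defs.

(* Main.v *)
Require Import Defs.
From HB Require Import structures.
From mathcomp Require Import all_boot all_order all_algebra.
From mathcomp Require Import all_classical all_reals all_analysis.
From mathcomp Require Import ring lra.
Import Order.TTheory GRing.Theory Num.Theory.
Import numFieldNormedType.Exports.
Local Open Scope classical_set_scope.
Local Open Scope ring_scope.
Set Implicit Arguments. Unset Strict Implicit.

Lemma dotvE (R : realType) n' (u v : 'cV[R]_n'.+1) : dotv u v = (u^T *m v) 0 0.
Proof. by rewrite /dotv mxE; apply: eq_bigr => i _; rewrite mxE. Qed.

Lemma dotvC (R : realType) n' (u v : 'cV[R]_n'.+1) : dotv u v = dotv v u.
Proof. by rewrite /dotv; apply: eq_bigr => i _; rewrite mulrC. Qed.

Lemma dotvDl (R : realType) n' (u w v : 'cV[R]_n'.+1) : dotv (u + w) v = dotv u v + dotv w v.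
Proof. by rewrite !dotvE linearD /= mulmxDl mxE. Qed.

Lemma dotvZl (R : realType) n' a (u v : 'cV[R]_n'.+1) : dotv (a *: u) v = a * dotv u v.
Proof. by rewrite !dotvE linearZ /= -scalemxAl mxE. Qed.

Lemma dotvNl (R : realType) n' (u v : 'cV[R]_n'.+1) : dotv (- u) v = - dotv u v.
Proof. by rewrite -scaleN1r dotvZl mulN1r. Qed.

Lemma dotvBl (R : realType) n' (u w v : 'cV[R]_n'.+1) : dotv (u - w) v = dotv u v - dotv w v.
Proof. by rewrite dotvDl dotvNl. Qed.

Lemma dotvDr (R : realType) n' (u w v : 'cV[R]_n'.+1) : dotv v (u + w) = dotv v u + dotv v w.
Proof. by rewrite dotvC dotvDl !(dotvC v). Qed.
Lemma dotvZr (R : realType) n' a (u v : 'cV[R]_n'.+1) : dotv v (a *: u) = a * dotv v u.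
Proof. by rewrite dotvC dotvZl dotvC. Qed.
Lemma dotvBr (R : realType) n' (u w v : 'cV[R]_n'.+1) : dotv v (u - w) = dotv v u - dotv v w.
Proof. by rewrite dotvC dotvBl !(dotvC v). Qed.
Lemma dotv0l (R : realType) n' (v : 'cV[R]_n'.+1) : dotv 0 v = 0.
Proof. by rewrite /dotv big1 // => i _; rewrite mxE mul0r. Qed.
Lemma dotv0r (R : realType) n' (v : 'cV[R]_n'.+1) : dotv v 0 = 0.
Proof. by rewrite dotvC dotv0l. Qed.

Lemma dotv_ge0 (R : realType) n' (v : 'cV[R]_n'.+1) : 0 <= dotv v v.
Proof. by rewrite /dotv sumr_ge0 // => i _; rewrite -expr2 sqr_ge0. Qed.

Lemma dotv_eq0 (R : realType) n' (v : 'cV[R]_n'.+1) : dotv v v = 0 -> v = 0.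
Proof.
move=> /eqP; rewrite /dotv psumr_eq0 => [/allP H|i _]; last by rewrite -expr2 sqr_ge0.
apply/matrixP => i j; rewrite (ord1 j) mxE.
by have := H i (mem_index_enum _); rewrite /= mulf_eq0 orbb => /eqP.
Qed.

Lemma enorm_sqr (R : realType) n' (v : 'cV[R]_n'.+1) : enorm v ^+ 2 = dotv v v.
Proof. by rewrite /enorm sqr_sqrtr // dotv_ge0. Qed.
Lemma enorm_ge0 (R : realType) n' (v : 'cV[R]_n'.+1) : 0 <= enorm v.
Proof. by rewrite /enorm sqrtr_ge0. Qed.
Lemma enorm0 (R : realType) n' : enorm (0 : 'cV[R]_n'.+1) = 0.
Proof. by rewrite /enorm dotv0l sqrtr0. Qed.
Lemma enorm_eq0 (R : realType) n' (v : 'cV[R]_n'.+1) : enorm v = 0 -> v = 0.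
Proof. by move=> h; apply: dotv_eq0; rewrite -enorm_sqr h expr2 mul0r. Qed.
Lemma enormZ (R : realType) n' a (v : 'cV[R]_n'.+1) : enorm (a *: v) = `|a| * enorm v.
Proof. by rewrite /enorm dotvZl dotvZr mulrA sqrtrM ?sqr_ge0 // -expr2 sqrtr_sqr. Qed.
Lemma enormN (R : realType) n' (v : 'cV[R]_n'.+1) : enorm (- v) = enorm v.
Proof. by rewrite -scaleN1r enormZ normrN normr1 mul1r. Qed.

Lemma CS2 (R : realType) n' (u v : 'cV[R]_n'.+1) : dotv u v ^+ 2 <= dotv u u * dotv v v.
Proof.
have [->|v0] := eqVneq v 0; first by rewrite !dotv0r expr2 !mulr0.
have pv : 0 < dotv v v.
  by rewrite lt_def dotv_ge0 andbT; apply/eqP => /dotv_eq0; apply/eqP.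
set a := dotv u v; set b := dotv v v; set c := dotv u u.
have h : 0 <= dotv (u - (a / b) *: v) (u - (a / b) *: v) by exact: dotv_ge0.
rewrite dotvBl !dotvBr !dotvZl !dotvZr (dotvC v u) -/a -/b -/c in h.
have : 0 <= c * b - a ^+ 2.
  have -> : c * b - a ^+ 2 = b * (c - a / b * a - a / b * (a - a / b * b)).
    by field; rewrite gt_eqF.
  apply: mulr_ge0; first exact: ltW.
  by move: h; rewrite -/a mulrBr.
by rewrite subr_ge0.
Qed.

Lemma CS (R : realType) n' (u v : 'cV[R]_n'.+1) : `|dotv u v| <= enorm u * enorm v.
Proof.
by rewrite /enorm -sqrtrM ?dotv_ge0 // -sqrtr_sqr ler_sqrt ?CS2 // mulr_ge0 ?dotv_ge0.
Qed.

Lemma enormD (R : realType) n' (u v : 'cV[R]_n'.+1) : enorm (u + v) <= enorm u + enorm v.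
Proof.
rewrite -ler_sqr ?nnegrE ?addr_ge0 ?enorm_ge0 // enorm_sqr dotvDl !dotvDr.
rewrite sqrrD !enorm_sqr (dotvC v u).
have := CS u v; rewrite ler_norml => /andP [_ h].
lra.
Qed.

Lemma enormB (R : realType) n' (u v : 'cV[R]_n'.+1) : enorm (u - v) <= enorm u + enorm v.
Proof. by rewrite -(enormN v) enormD. Qed.

Lemma enorm_coord (R : realType) n' (u : 'cV[R]_n'.+1) i : `|u i 0| <= enorm u.
Proof.
rewrite -sqrtr_sqr /enorm ler_sqrt ?dotv_ge0 // /dotv (bigD1 i) //= -expr2 lerDl sumr_ge0 // => j _.
by rewrite -expr2 sqr_ge0.
Qed.

Definition mN (R : realType) m n (M : 'M[R]_(m, n)) : R := \sum_i \sum_j `|M i j|.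

Lemma mN_ge0 (R : realType) m n (M : 'M[R]_(m, n)) : 0 <= mN M.
Proof. by rewrite /mN sumr_ge0 // => i _; rewrite sumr_ge0. Qed.

Lemma coord_le_sum (R : realType) n (f : 'I_n -> R) i : (forall j, 0 <= f j) -> f i <= \sum_j f j.
Proof. by move=> h; rewrite (bigD1 i) //= lerDl sumr_ge0. Qed.

Lemma enorm_le_sum (R : realType) n' (y : 'cV[R]_n'.+1) : enorm y <= \sum_i `|y i 0|.
Proof.
rewrite -ler_sqr ?nnegrE ?enorm_ge0 ?sumr_ge0 // enorm_sqr expr2 /dotv big_distrl /=.
apply: ler_sum => i _; apply: (le_trans (real_ler_norm _)); first exact: num_real.
rewrite normrM ler_pM ?normr_ge0 //.
have := @coord_le_sum _ _ (fun j => `|y j 0|) i; by apply; move=> j; rewrite normr_ge0.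

Qed.

Lemma Mbound (R : realType) n' (M : 'M[R]_n'.+1) (x : 'cV[R]_n'.+1) : enorm (M *m x) <= mN M * enorm x.
Proof.
apply: (le_trans (enorm_le_sum _)); rewrite /mN big_distrl /=; apply: ler_sum => i _.
rewrite mxE big_distrl /=; apply: (le_trans (ler_norm_sum _ _ _)); apply: ler_sum => j _.
by rewrite normrM ler_wpM2l ?normr_ge0 // enorm_coord.
Qed.

Lemma pAvD (R : realType) n' (A : 'M[R]_n'.+1) p q v : pAv A (p + q) v = pAv A p v + pAv A q v.
Proof. by rewrite /pAv rmorphD mulmxDl. Qed.
Lemma pAvB (R : realType) n' (A : 'M[R]_n'.+1) p q v : pAv A (p - q) v = pAv A p v - pAv A q v.
Proof. by rewrite /pAv rmorphB mulmxBl. Qed.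
Lemma pAvZ (R : realType) n' (A : 'M[R]_n'.+1) c p v : pAv A (c *: p) v = c *: pAv A p v.
Proof. by rewrite /pAv linearZ /= -scalemxAl. Qed.
Lemma pAvM (R : realType) n' (A : 'M[R]_n'.+1) p q v : pAv A (p * q) v = pAv A p (pAv A q v).
Proof. by rewrite /pAv rmorphM mulmxA. Qed.
Lemma pAvXn (R : realType) n' (A : 'M[R]_n'.+1) k v : pAv A ('X^k) v = A ^+ k *m v.
Proof. by rewrite /pAv rmorphXn /= horner_mx_X. Qed.
Lemma pAvC (R : realType) n' (A : 'M[R]_n'.+1) c v : pAv A (c%:P) v = c *: v.
Proof. by rewrite /pAv horner_mx_C mul_scalar_mx. Qed.
Lemma pAvv0 (R : realType) n' (A : 'M[R]_n'.+1) p : pAv A p 0 = 0.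
Proof. by rewrite /pAv mulmx0. Qed.
Lemma pAvvB (R : realType) n' (A : 'M[R]_n'.+1) p u v : pAv A p (u - v) = pAv A p u - pAv A p v.
Proof. by rewrite /pAv mulmxBr. Qed.
Lemma pAvvZ (R : realType) n' (A : 'M[R]_n'.+1) p c v : pAv A p (c *: v) = c *: pAv A p v.
Proof. by rewrite /pAv scalemxAr. Qed.

Lemma horner_mx_tr (R : realType) n' (A : 'M[R]_n'.+1) p : A^T = A -> (horner_mx A p)^T = horner_mx A p.
Proof.
move=> hA; elim/poly_ind: p => [|p c IH]; first by rewrite rmorph0 trmx0.
rewrite rmorphD linearD /= horner_mx_C tr_scalar_mx; congr (_ + _).
rewrite {1}mulrC !rmorphM /= horner_mx_X trmx_mul IH hA.
by [].
Qed.

Lemma pAv_sym (R : realType) n' (A : 'M[R]_n'.+1) p u w : A^T = A ->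
  dotv (pAv A p u) w = dotv u (pAv A p w).
Proof. by move=> hA; rewrite !dotvE /pAv trmx_mul horner_mx_tr // mulmxA. Qed.

Lemma horner_mx_sum (R : realType) n' (A : 'M[R]_n'.+1) (r : {poly R}) d : (size r <= d)%N ->
  horner_mx A r = \sum_(i < d) r`_i *: A ^+ i.
Proof.
move=> hr; have E : r = \poly_(i < d) r`_i.
  by apply/polyP => i; rewrite coef_poly; case: ltnP => // hi; apply/leq_sizeP: hi; apply: leq_trans hr _.
rewrite {1}E poly_def linear_sum; apply: eq_bigr => i _.
by rewrite linearZ /= rmorphXn /= horner_mx_X.
Qed.

Lemma dotv_suml (R : realType) n' I (r : seq I) (P : pred I) (F : I -> 'cV[R]_n'.+1) w :
  dotv (\sum_(i <- r | P i) F i) w = \sum_(i <- r | P i) dotv (F i) w.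
Proof.
by apply: (big_morph (fun x => dotv x w)) => [x y|]; [exact: dotvDl | exact: dotv0l].
Qed.

Lemma pAv_sum (R : realType) n' (A : 'M[R]_n'.+1) (r : {poly R}) d v : (size r <= d)%N ->
  pAv A r v = \sum_(i < d) r`_i *: (A ^+ i *m v).
Proof.
move=> hr; rewrite /pAv (horner_mx_sum _ hr) mulmx_suml; apply: eq_bigr => i _.
by rewrite -scalemxAl.
Qed.

Lemma Ps_orth (R : realType) n' (A : 'M[R]_n'.+1) s v (p r : {poly R}) : is_Ps A s v p -> (size r <= s)%N ->
  dotv (pAv A r v) (pAv A p v) = 0.
Proof.
case=> _ _ ho hr; rewrite (pAv_sum _ _ hr) dotv_suml big1 // => i _.
by rewrite dotvZl ho ?mulr0.
Qed.

Lemma monic_diff (R : realType) (p q : {poly R}) s : p \is monic -> q \is monic ->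
  size p = s.+1 -> size q = s.+1 -> (size (q - p)%R <= s)%N.
Proof.
move=> mp mq sp sq; apply/leq_sizeP => j; rewrite leq_eqVlt => /orP [/eqP <-|hj].
  move/monicP: mp; move/monicP: mq; rewrite !lead_coefE sp sq /= coefB => -> ->.
  by rewrite subrr.
rewrite coefB; move/leq_sizeP: (eq_leq sp) => -> //; move/leq_sizeP: (eq_leq sq) => -> //.
by rewrite subrr.
Qed.

Lemma Ps_key (R : realType) n' (A : 'M[R]_n'.+1) s v (p q : {poly R}) : is_Ps A s v p -> q \is monic ->
  size q = s.+1 -> dotv (pAv A q v) (pAv A p v) = dotv (pAv A p v) (pAv A p v).
Proof.
move=> hP mq sq; have [mp sp _] := hP.
have -> : q = p + (q - p) by rewrite addrC subrK.
by rewrite pAvD dotvDl (Ps_orth hP (monic_diff mp mq sp sq)) addr0.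
Qed.

Lemma Ps_min (R : realType) n' (A : 'M[R]_n'.+1) s v (p q : {poly R}) : is_Ps A s v p -> q \is monic ->
  size q = s.+1 -> enorm (pAv A p v) <= enorm (pAv A q v).
Proof.
move=> hP mq sq; have := CS (pAv A q v) (pAv A p v).
rewrite (Ps_key hP mq sq) -enorm_sqr ger0_norm ?sqr_ge0 // expr2.
have [->|h] := eqVneq (enorm (pAv A p v)) 0; first by rewrite enorm_ge0.
by rewrite ler_pM2r // lt_def h enorm_ge0.
Qed.

Lemma Ps_pyth (R : realType) n' (A : 'M[R]_n'.+1) s v (p q : {poly R}) : is_Ps A s v p -> q \is monic ->
  size q = s.+1 -> enorm (pAv A q v) ^+ 2 = enorm (pAv A p v) ^+ 2 + enorm (pAv A (q - p) v) ^+ 2.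
Proof.
move=> hP mq sq; have [mp sp _] := hP.
have o := Ps_orth hP (monic_diff mp mq sp sq).
move: o; set d := q - p => o.
have -> : q = p + d by rewrite /d addrC subrK.
rewrite !enorm_sqr pAvD dotvDl !dotvDr o (dotvC (pAv A p v)) o.
by rewrite addr0 add0r.
Qed.

Definition lim0 (R : realType) (a : nat -> R) :=
  forall e, 0 < e -> exists N, forall k, (N <= k)%N -> `|a k| <= e.

Lemma lim0_cvg (R : realType) (f : nat -> R) l : lim0 (fun k => f k - l) -> f @ \oo --> l.
Proof.
move=> h; apply/cvgrPdist_le => e he; have [N hN] := h e he.
by exists N => // k /= hk; rewrite distrC; apply: hN.
Qed.

Lemma cvg_lim0 (R : realType) (f : nat -> R) l : f @ \oo --> l -> lim0 (fun k => f k - l).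
Proof.
move/cvgrPdist_le => h e he; have [N _ hN] := h e he.
by exists N => k hk; rewrite distrC; apply: hN.
Qed.

Lemma lim0_le (R : realType) (a b : nat -> R) N0 : (forall k, (N0 <= k)%N -> `|b k| <= a k) ->
  lim0 a -> lim0 b.
Proof.
move=> hb ha e he; have [N hN] := ha e he; exists (maxn N N0) => k hk.
rewrite geq_max in hk; case/andP: hk => h1 h2.
by apply: le_trans (hb _ h2) _; apply: le_trans (hN _ h1); apply: real_ler_norm; exact: num_real.
Qed.

Lemma lim0D (R : realType) (a b : nat -> R) : lim0 a -> lim0 b -> lim0 (fun k => a k + b k).
Proof.
move=> ha hb e he; have [N1 h1] := ha (e / 2) (divr_gt0 he (ltr0Sn _ 1)).
have [N2 h2] := hb (e / 2) (divr_gt0 he (ltr0Sn _ 1)); exists (maxn N1 N2) => k hk.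
rewrite geq_max in hk; case/andP: hk => k1 k2.
apply: le_trans (ler_normD _ _) _; rewrite [e]splitr; exact: lerD (h1 _ k1) (h2 _ k2).
Qed.

Lemma lim0Z (R : realType) (a : nat -> R) c : lim0 a -> lim0 (fun k => c * a k).
Proof.
move=> ha e he; have [N hN] := ha (e / (`|c| + 1)) (divr_gt0 he (ltr_wpDl (normr_ge0 _) ltr01)).
exists N => k hk; rewrite normrM.
have h := hN _ hk; rewrite ler_pdivlMr ?(ltr_wpDl (normr_ge0 _) ltr01) // in h.
by apply: le_trans h; rewrite mulrDr mulr1 mulrC lerDl normr_ge0.
Qed.

Lemma lim0_abs (R : realType) (a : nat -> R) : lim0 a -> lim0 (fun k => `|a k|).
Proof. by move=> ha e he; have [N hN] := ha e he; exists N => k hk; rewrite normr_id hN. Qed.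

Lemma lim0_const (R : realType) (c : R) : lim0 (fun _ => c) -> c = 0.
Proof.
move=> h; apply/eqP; rewrite -normr_le0; apply/ler_addgt0Pr => e he.
by have [N hN] := h e he; rewrite add0r; exact: hN N (leqnn N).
Qed.

Lemma lim0_sub (R : realType) (a : nat -> R) (phi : nat -> nat) :
  (forall k, (k <= phi k)%N) -> lim0 a -> lim0 (fun k => a (phi k)).
Proof.
move=> hp ha e he; have [N hN] := ha e he; exists N => k hk.
by apply: hN; apply: leq_trans hk (hp k).
Qed.

Lemma lim0_shift (R : realType) (a : nat -> R) m : lim0 a -> lim0 (fun k => a (k + m)%N).
Proof. by apply: lim0_sub => k; rewrite leq_addr. Qed.

Lemma lim_le (R : realType) (a b : nat -> R) x y N0 : lim0 (fun k => a k - x) -> lim0 (fun k => b k - y) ->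
  (forall k, (N0 <= k)%N -> a k <= b k) -> x <= y.
Proof.
move=> ha hb hab; apply/ler_addgt0Pr => e he.
have [N1 h1] := ha (e / 2) (divr_gt0 he (ltr0Sn _ 1)).
have [N2 h2] := hb (e / 2) (divr_gt0 he (ltr0Sn _ 1)).
set k := maxn N0 (maxn N1 N2).
have k0 : (N0 <= k)%N by rewrite leq_maxl.
have k1 : (N1 <= k)%N by rewrite /k (leq_trans (leq_maxl N1 N2)) // leq_maxr.
have k2 : (N2 <= k)%N by rewrite /k (leq_trans (leq_maxr N1 N2)) // leq_maxr.
have := h1 _ k1; have := h2 _ k2; have := hab _ k0.
rewrite !ler_norml => hk /andP [_ hb2] /andP [ha1 _].
have : e = e / 2 + e / 2 by rewrite -splitr.
lra.
Qed.

Lemma lim_unique (R : realType) (a : nat -> R) x y : lim0 (fun k => a k - x) -> lim0 (fun k => a k - y) -> x = y.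
Proof.
move=> hx hy; apply/le_anti/andP; split; [exact: (lim_le (N0:=0)) hx hy _ | exact: (lim_le (N0:=0)) hy hx _].
Qed.

Lemma lim0_sqr (R : realType) (a : nat -> R) : (forall k, 0 <= a k) -> lim0 (fun k => a k ^+ 2) -> lim0 a.
Proof.
move=> h0 ha e he; have [N hN] := ha (e ^+ 2) (exprn_gt0 2 he); exists N => k hk.
have := hN _ hk; rewrite ger0_norm ?sqr_ge0 // ger0_norm ?h0 // => h; rewrite -ler_sqr ?nnegrE ?h0 ?(ltW he) //.
Qed.

Lemma lim_mul (R : realType) (a b : nat -> R) x y : lim0 (fun k => a k - x) -> lim0 (fun k => b k - y) ->
  lim0 (fun k => a k * b k - x * y).
Proof.
move=> ha hb.
have hbb : forall k, (0 <= k)%N -> `|(a k - x) * b k| <= `|a k - x| * (`|b k - y| + `|y|).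
  move=> k _; rewrite normrM ler_wpM2l ?normr_ge0 //.
  by have := ler_normD (b k - y) y; rewrite subrK.
apply: (lim0_le (a := fun k => `|(a k - x) * b k| + `|x * (b k - y)|) (N0 := 0)).
  move=> k _; have -> : a k * b k - x * y = (a k - x) * b k + x * (b k - y) by ring.
  exact: ler_normD.
apply: lim0D; last by apply: lim0_abs; apply: lim0Z.
apply: (lim0_le (a := fun k => `|a k - x| * (`|b k - y| + `|y|)) (N0 := 0)).
  by move=> k _; rewrite normr_id hbb.
apply: (lim0_le (a := fun k => `|a k - x| * `|b k - y| + `|y| * `|a k - x|) (N0 := 0)).
  move=> k _; rewrite mulrDr (mulrC _ `|y|) ger0_norm // addr_ge0 ?mulr_ge0 ?normr_ge0.
apply: lim0D; last by apply: lim0Z; apply: lim0_abs.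
move=> e he; have [N1 h1] := ha 1 ltr01; have [N2 h2] := hb e he.
exists (maxn N1 N2) => k; rewrite geq_max => /andP [k1 k2].
rewrite normrM !normr_id -[e]mul1r ler_pM ?normr_ge0 //; [exact: h1 | exact: h2].
Qed.

Lemma mk_monic (R : realType) n' (A : 'M[R]_n'.+1) (r : {poly R}) s : r != 0 -> (size r <= s.+1)%N ->
  exists q : {poly R}, [/\ q \is monic, size q = s.+1 & forall x, pAv A r x = 0 -> pAv A q x = 0].
Proof.
move=> r0 hs; set k := (s.+1 - size r)%N.
have lr : lead_coef r != 0 by rewrite lead_coef_eq0.
exists ((lead_coef r)^-1 *: ('X^k * r)); split.
- by rewrite monicE lead_coefZ lead_coefM lead_coefXn mul1r mulVf.
- rewrite size_scale ?invr_eq0 // size_mul //; last exact: monic_neq0 (monicXn _ _).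
  have -> : size (GRing.exp (polyX R) k) = k.+1 by exact: size_polyXn.
  rewrite /k.
  have := size_poly_gt0 r; rewrite r0 => h; rewrite addSn /=.
  by rewrite subnK.
- by move=> x hx; rewrite pAvZ pAvM hx pAvv0 scaler0.
Qed.

Lemma enorm_sub_le (R : realType) n' (x y : 'cV[R]_n'.+1) : enorm x <= enorm y + enorm (x - y).
Proof. by have := enormD y (x - y); rewrite addrC subrK. Qed.

Lemma enorm_rev (R : realType) n' (x y : 'cV[R]_n'.+1) : `|enorm x - enorm y| <= enorm (x - y).
Proof.
rewrite ler_norml; have h1 := enorm_sub_le x y; have h2 := enorm_sub_le y x.
rewrite -(enormN (y - x)) opprB in h2; apply/andP; split; lra.
Qed.

Lemma enorm_sum (R : realType) n' (I : finType) (F : I -> 'cV[R]_n'.+1) :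
  enorm (\sum_i F i) <= \sum_i enorm (F i).
Proof.
elim/big_rec2: _ => [|i y x _ h]; first by rewrite enorm0.
by apply: le_trans (enormD _ _) _; rewrite lerD2l.
Qed.

Lemma pAv_bound (R : realType) n' (A : 'M[R]_n'.+1) p x :
  enorm (pAv A p x) <= mN (horner_mx A p) * enorm x.
Proof. exact: Mbound. Qed.

Definition Gs (R : realType) n' (A : 'M[R]_n'.+1) s := \sum_(i < s) mN (A ^+ i).
Definition Sc (R : realType) (r : {poly R}) s := \sum_(i < s) `|r`_i|.

Lemma Gs_ge0 (R : realType) n' (A : 'M[R]_n'.+1) s : 0 <= Gs A s.
Proof. by rewrite /Gs sumr_ge0 // => i _; exact: mN_ge0. Qed.
Lemma Sc_ge0 (R : realType) (r : {poly R}) s : 0 <= Sc r s.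
Proof. by rewrite /Sc sumr_ge0. Qed.

Lemma small_bound (R : realType) n' (A : 'M[R]_n'.+1) (r : {poly R}) s x : (size r <= s)%N ->
  enorm (pAv A r x) <= Sc r s * Gs A s * enorm x.
Proof.
move=> hr; rewrite (pAv_sum _ _ hr); apply: le_trans (enorm_sum _) _.
rewrite /Sc !big_distrl /=; apply: ler_sum => i _; rewrite enormZ -mulrA ler_wpM2l //.
apply: le_trans (Mbound _ _) _; rewrite ler_wpM2r ?enorm_ge0 //.
by have := @coord_le_sum R s (fun i => mN (A ^+ i)) i; apply => j; exact: mN_ge0.
Qed.

Lemma coefbound (R : realType) n' (A : 'M[R]_n'.+1) s uinf :
  (forall r : {poly R}, r != 0 -> (size r <= s)%N -> pAv A r uinf != 0) ->
  exists C, 0 <= C /\ forall r : {poly R}, (size r <= s)%N -> Sc r s <= C * enorm (pAv A r uinf).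
Proof.
move=> hind.
pose M : 'M[R]_(s, n'.+1) := \matrix_(i, k) (A ^+ i *m uinf) k 0.
have HM : forall r : {poly R}, (size r <= s)%N -> poly_rV r *m M = (pAv A r uinf)^T.
  move=> r hr; apply/rowP => k; rewrite (pAv_sum _ _ hr) !mxE summxE; apply: eq_bigr => i _.
  by rewrite !mxE.
have free : row_free M.
  apply: inj_row_free => c hc; have hr : (size (rVpoly c) <= s)%N by exact: size_poly.
  have := HM _ hr; rewrite rVpolyK hc => /esym /eqP; rewrite trmx_eq0 => /eqP h0.
  have [h|h] := eqVneq (rVpoly c) 0; first by rewrite -(rVpolyK c) h linear0.
  by move: (hind _ h hr); rewrite h0 eqxx.
case/row_freeP: free => L hL.
exists (\sum_i \sum_k `|L k i|); split; first by rewrite sumr_ge0 // => i _; rewrite sumr_ge0.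
move=> r hr; set y := pAv A r uinf.
have hc : poly_rV r = y^T *m L by rewrite -HM // -mulmxA hL mulmx1.
rewrite /Sc big_distrl /=; apply: ler_sum => i _.
have -> : r`_i = (y^T *m L) 0 i by rewrite -hc mxE.
rewrite mxE big_distrl /=; apply: le_trans (ler_norm_sum _ _ _) _; apply: ler_sum => k _.
by rewrite mxE normrM mulrC ler_wpM2l ?normr_ge0 // enorm_coord.
Qed.

Lemma lim0_ext (R : realType) (a b : nat -> R) : (forall k, a k = b k) -> lim0 a -> lim0 b.
Proof. by move=> h ha e he; have [N hN] := ha e he; exists N => k hk; rewrite -h hN. Qed.
Lemma lim0_0 (R : realType) : lim0 (fun _ : nat => (0 : R)).
Proof. by move=> e he; exists 0%N => k _; rewrite normr0 ltW. Qed.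
Lemma lim0B (R : realType) (a b : nat -> R) : lim0 a -> lim0 b -> lim0 (fun k => a k - b k).
Proof.
move=> ha hb; apply: lim0D ha _; apply: (lim0_ext (a := fun k => -1 * b k)).
  by move=> k; rewrite mulN1r.
exact: lim0Z.
Qed.

Lemma core (R : realType) n' (A : 'M[R]_n'.+1) s (u : nat -> 'cV[R]_n'.+1) uinf
  (p : nat -> {poly R}) tau pv :
  0 < tau ->
  (forall j, is_Ps A s (u j) (p j)) ->
  (forall j, enorm (u j) = 1) ->
  lim0 (fun j => enorm (u j - uinf)) ->
  lim0 (fun j => enorm (pAv A (p j) (u j)) - tau) ->
  is_Ps A s uinf pv ->
  enorm (pAv A pv uinf) = tau /\ lim0 (fun j => enorm (pAv A (p j) (u j) - pAv A pv uinf)).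
Proof.
move=> tau0 hP hu he ht hpv.
pose e := fun j => enorm (u j - uinf).
have e0 : forall j, 0 <= e j by move=> j; exact: enorm_ge0.
have eN : forall j, enorm (uinf - u j) = e j by move=> j; rewrite -enormN opprB.
have usc : forall q, q \is monic -> size q = s.+1 -> tau <= enorm (pAv A q uinf).
  move=> q mq sq.
  apply: (lim_le (N0 := 0) (a := fun j => enorm (pAv A (p j) (u j)))
     (b := fun j => enorm (pAv A q uinf) + mN (horner_mx A q) * e j)) ht _ _.
  - apply: (lim0_ext (a := fun j => mN (horner_mx A q) * e j)); last exact: lim0Z.
    by move=> j; rewrite addrAC subrr add0r.
  - move=> j _; have [mpj spj _] := hP j.
    apply: le_trans (Ps_min (hP j) mq sq) _.
    apply: le_trans (enorm_sub_le _ (pAv A q uinf)) _.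
    by rewrite lerD2l -pAvvB; exact: pAv_bound.
have hind : forall r : {poly R}, r != 0 -> (size r <= s)%N -> pAv A r uinf != 0.
  move=> r r0 hr; apply/eqP => h0.
  have [q [mq sq hq]] := mk_monic A r0 (leqW hr).
  by have := usc q mq sq; rewrite hq // enorm0 => /(lt_le_trans tau0); rewrite ltxx.
have [C [C0 hC]] := coefbound hind.
pose G := Gs A s; pose B := mN (horner_mx A pv).
have G0 : 0 <= G by exact: Gs_ge0.
have B0 : 0 <= B by exact: mN_ge0.
have [mpv spv _] := hpv.
pose d := fun j => pv - p j.
have sd : forall j, (size (d j) <= s)%N.
  by move=> j; have [mpj spj _] := hP j; exact: monic_diff.
have hpj : forall j x, pAv A (p j) x = pAv A pv x - pAv A (d j) x.
  by move=> j x; rewrite /d pAvB opprB addrC subrK.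
pose D := fun j => enorm (pAv A (d j) (u j)).
have D0 : forall j, 0 <= D j by move=> j; exact: enorm_ge0.
have DB : forall j, D j <= 2 * B.
  move=> j; have [mpj spj _] := hP j.
  rewrite /D /d pAvB; apply: le_trans (enormB _ _) _.
  have h1 := Ps_min (hP j) mpv spv.
  have h2 := pAv_bound A pv (u j); rewrite hu mulr1 -/B in h2.
  lra.
pose S := fun j => Sc (d j) s.
have S0 : forall j, 0 <= S j by move=> j; exact: Sc_ge0.
have SB : forall j, S j <= C * D j + (C * G * e j) * S j.
  move=> j; apply: le_trans (hC _ (sd j)) _.
  have -> : C * D j + C * G * e j * S j = C * (D j + G * e j * S j) by ring.
  rewrite ler_wpM2l //.
  apply: le_trans (enorm_sub_le _ (pAv A (d j) (u j))) _.
  rewrite /D lerD2l -pAvvB.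
  have h := small_bound A (uinf - u j) (sd j); rewrite eN -/G -/(S j) in h.
  lra.
have CG0 : 0 < C * G + 1 by rewrite ltr_wpDl ?mulr_ge0.
have [N1 hN1] := he (1 / (2 * (C * G + 1))) (divr_gt0 ltr01 (mulr_gt0 (ltr0Sn _ 1) CG0)).
have hCGe : forall j, (N1 <= j)%N -> C * G * e j <= 1 / 2.
  move=> j hj; have := hN1 _ hj; rewrite ger0_norm ?enorm_ge0 // => h.
  have h' : (C * G) * e j <= (C * G) * (1 / (2 * (C * G + 1))) by rewrite ler_wpM2l ?mulr_ge0.
  apply: le_trans h' _.
  have -> : C * G * (1 / (2 * (C * G + 1))) = 1 / 2 - 1 / 2 / (C * G + 1).
    by field; rewrite gt_eqF.
  have : 0 <= 1 / 2 / (C * G + 1) by rewrite divr_ge0 // ltW.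
  lra.
have SK : forall j, (N1 <= j)%N -> S j <= 4 * C * B.
  move=> j hj; have h1 := SB j; have h2 := hCGe _ hj.
  have h3 : (C * G * e j) * S j <= 1 / 2 * S j by rewrite ler_wpM2r.
  have h4 : C * D j <= C * (2 * B) by rewrite ler_wpM2l.
  lra.
have lsc : enorm (pAv A pv uinf) <= tau.
  apply: (lim_le (N0 := N1) (a := fun j => enorm (pAv A pv uinf))
     (b := fun j => enorm (pAv A (p j) (u j)) + (B + 4 * C * B * G) * e j)).
  - by apply: (lim0_ext (a := fun _ => 0)); [move=> j; rewrite subrr | exact: lim0_0].
  - apply: (lim0_ext (a := fun j => (enorm (pAv A (p j) (u j)) - tau) + (B + 4 * C * B * G) * e j)).
      by move=> j; rewrite addrAC.
    by apply: lim0D ht _; apply: lim0Z.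
  move=> j hj; have [mpj spj _] := hP j.
  apply: le_trans (Ps_min hpv mpj spj) _.
  apply: le_trans (enorm_sub_le _ (pAv A (p j) (u j))) _.
  rewrite lerD2l -pAvvB hpj; apply: le_trans (enormB _ _) _.
  have h1 := pAv_bound A pv (uinf - u j); rewrite eN -/B in h1.
  have h2 := small_bound A (uinf - u j) (sd j); rewrite eN -/G -/(S j) in h2.
  have h3 : S j * (G * e j) <= (4 * C * B) * (G * e j).
    by rewrite ler_wpM2r ?mulr_ge0 ?(SK _ hj).
  rewrite mulrDl; lra.
have tauE : enorm (pAv A pv uinf) = tau by apply/le_anti; rewrite lsc usc.
have pvc : lim0 (fun j => enorm (pAv A pv (u j)) - tau).
  apply: (lim0_le (a := fun j => B * e j) (N0 := 0)); last exact: lim0Z.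
  move=> j _; rewrite -tauE; apply: le_trans (enorm_rev _ _) _.
  by rewrite -pAvvB; exact: pAv_bound.
have Dc : lim0 D.
  apply: lim0_sqr => //.
  apply: (lim0_ext (a := fun j => (enorm (pAv A pv (u j)) * enorm (pAv A pv (u j)) - tau * tau)
         - (enorm (pAv A (p j) (u j)) * enorm (pAv A (p j) (u j)) - tau * tau))).
    move=> j; have [mpj spj _] := hP j.
    have := Ps_pyth (hP j) mpv spv; rewrite -!expr2 => ->.
    by rewrite /D /d; ring.
  by apply: lim0B; apply: lim_mul.
split => //.
apply: (lim0_le (a := fun j => B * e j + D j) (N0 := 0)); last by apply: lim0D => //; apply: lim0Z.
move=> j _; rewrite ger0_norm ?enorm_ge0 //.
have -> : pAv A (p j) (u j) - pAv A pv uinf = pAv A pv (u j - uinf) - pAv A (d j) (u j).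
  by rewrite hpj pAvvB addrAC.
apply: le_trans (enormB _ _) _; rewrite lerD2r; exact: pAv_bound.
Qed.

Lemma grade_le (R : realType) n' (A : 'M[R]_n'.+1) x (q : {poly R}) k :
  q \is monic -> size q = k.+1 -> pAv A q x = 0 -> (grade A x <= k)%N.
Proof.
move=> mq sq hq; rewrite /grade; case: ex_minnP => m _ hm; apply: hm.
by apply/asboolP; exists q.
Qed.

Lemma grade_annih (R : realType) n' (A : 'M[R]_n'.+1) x :
  exists q : {poly R}, [/\ q \is monic, size q = (grade A x).+1 & pAv A q x = 0].
Proof. by rewrite /grade; case: ex_minnP => m /asboolP [q hq] _; exists q. Qed.

Lemma homo_ge (phi : nat -> nat) : {homo phi : a b / (a < b)%N} -> forall k, (k <= phi k)%N.
Proof.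
move=> h; elim => [|k IH] //; apply: leq_ltn_trans IH _; exact: h.
Qed.

Lemma lim0_unshift (R : realType) (a : nat -> R) : lim0 (fun k => a k.+1) -> lim0 a.
Proof.
move=> h e he; have [N hN] := h e he; exists N.+1 => -[|k] hk //; exact: hN.
Qed.

Theorem theorem4p2 (R : realType) (n' : nat) (A : 'M[R]_n'.+1) (s : nat)
  (v0 : 'cV[R]_n'.+1)
  (vt v : nat -> 'cV[R]_n'.+1) (P : nat -> {poly R}) :
  A^T = A ->
  (1 <= s)%N -> (s < dmin A)%N ->
  enorm v0 = 1 -> (s.+1 <= grade A v0)%N ->
  v 0%N = v0 ->
  (forall k, is_Ps A s (v k) (P k)) ->
  (forall k, vt k.+1 = pAv A (P k) (v k)) ->
  (forall k, v k.+1 = (enorm (vt k.+1))^-1 *: vt k.+1) ->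
  exists tau : R,
    [/\ 0 < tau,
        (fun k => enorm (vt k)) @ \oo --> tau &
        forall vs : 'cV[R]_n'.+1,
          (exists phi : nat -> nat, {homo phi : a b / (a < b)%N} /\
             (fun k => enorm (v (2 * phi k)%N - vs)) @ \oo --> (0 : R)) ->
          forall pv : {poly R}, is_Ps A s vs pv ->
          let ws := tau^-1 *: pAv A pv vs in
          forall pw : {poly R}, is_Ps A s ws pw ->
            [/\ pAv A (pw * pv) vs - tau ^+ 2 *: vs = 0,
                (s < grade A vs)%N & (grade A vs <= 2 * s)%N]].
Proof.
move=> hA s1 sd nv0 gv0 hv0 hP hvt hv.
pose t := fun k => enorm (vt k).
have step : forall k, enorm (v k) = 1 -> 0 < t k.+1 -> enorm (v k.+1) = 1 /\ t k.+1 <= t k.+2.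
  move=> k nk tk.
  have tk0 : t k.+1 != 0 by rewrite gt_eqF.
  have nk1 : enorm (v k.+1) = 1.
    by rewrite hv enormZ ger0_norm ?invr_ge0 ?enorm_ge0 // mulVf.
  split => //.
  have hvtv : vt k.+1 = t k.+1 *: v k.+1 by rewrite hv scalerA mulfV // scale1r.
  have [mP sP _] := hP k.+1.
  have e1 : t k.+1 ^+ 2 = t k.+1 * dotv (v k) (vt k.+2).
    have := Ps_key (hP k) mP sP; rewrite -hvt => key.
    rewrite /t enorm_sqr -key pAv_sym // hvtv pAvvZ -hvt dotvZr.
    by rewrite -hvtv.
  have cs := CS (v k) (vt k.+2); rewrite nk mul1r in cs.
  have : t k.+1 ^+ 2 <= t k.+1 * t k.+2.
    rewrite e1; apply: ler_wpM2l; first exact: ltW.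
    exact: le_trans (real_ler_norm (num_real _)) cs.
  by rewrite expr2 ler_pM2l.
have inv : forall k, enorm (v k) = 1 /\ 0 < t k.+1.
  elim => [|k [nk tk]].
    split; first by rewrite hv0.
    rewrite lt_def enorm_ge0 andbT; apply/eqP => h0.
    have [mP sP _] := hP 0%N.
    have h1 : pAv A (P 0%N) v0 = 0 by rewrite -hv0 -hvt; exact: enorm_eq0.
    by have := leq_trans gv0 (grade_le mP sP h1); rewrite ltnn.
  have [nk1 mono] := step k nk tk; split => //; exact: lt_le_trans tk mono.
have mono : forall k, t k.+1 <= t k.+2.
  by move=> k; have [nk tk] := inv k; exact: (step k nk tk).2.
have nv : forall k, enorm (v k) = 1 by move=> k; exact: (inv k).1.
have sX : size ('X^s : {poly R}) = s.+1 by exact: size_polyXn.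
have bnd : forall k, t k.+1 <= mN (A ^+ s).
  move=> k; rewrite /t hvt; apply: le_trans (Ps_min (hP k) (monicXn _ _) sX) _.
  by rewrite pAvXn; apply: le_trans (Mbound _ _) _; rewrite nv mulr1.
pose u := fun k => t k.+1.
have ndu : nondecreasing_seq u by apply/nondecreasing_seqP => k; exact: mono.
have ubu : has_ubound (range u) by exists (mN (A ^+ s)) => y [k _ <-]; exact: bnd.
have cu := nondecreasing_cvgn ndu ubu.
set tau := sup (range u) in cu.
have lu : lim0 (fun k => u k - tau) := cvg_lim0 cu.
have tu : forall k, u 0%N <= u k by move=> k; apply: ndu.
have t1 : 0 < u 0%N := (inv 0%N).2.
have tau0 : 0 < tau.
  apply: lt_le_trans t1 _.
  apply: (lim_le (N0 := 0) (a := fun _ => u 0%N) (b := u)) _ lu _.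
  - by apply: (lim0_ext (a := fun _ => 0)); [move=> j; rewrite subrr | exact: lim0_0].
  - by move=> k _; exact: tu k.
exists tau; split => //.
  by apply: lim0_cvg; exact: lim0_unshift lu.
move=> vs [phi [hphi hcv]] pv hpv ws pw hpw.
have le_phi := homo_ge hphi.
have ev : lim0 (fun j => enorm (v (2 * phi j)%N - vs)).
  apply: (lim0_ext (a := fun j => enorm (v (2 * phi j)%N - vs) - 0)).
    by move=> j; rewrite subr0.
  exact: cvg_lim0 hcv.
have le2 : forall j, (j <= 2 * phi j)%N.
  by move=> j; apply: leq_trans (le_phi j) _; rewrite leq_pmull.
have le3 : forall j, (j <= (2 * phi j).+1)%N by move=> j; apply: leq_trans (le2 j) _.
have ht1 : lim0 (fun j => enorm (pAv A (P (2 * phi j)%N) (v (2 * phi j)%N)) - tau).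
  apply: (lim0_ext (a := fun j => u (2 * phi j)%N - tau)); first by move=> j; rewrite /u /t hvt.
  exact: (lim0_sub (fun j => le2 j) lu).
have [E1 C1] := core tau0 (fun j => hP (2 * phi j)%N) (fun j => nv _) ev ht1 hpv.
have ev2 : lim0 (fun j => enorm (v (2 * phi j).+1 - ws)).
  pose a := fun j => pAv A (P (2 * phi j)%N) (v (2 * phi j)%N).
  pose b := pAv A pv vs.
  apply: (lim0_le (a := fun j => (u 0%N)^-1 * (enorm (a j - b) + `|u (2 * phi j)%N - tau|)) (N0 := 0)).
  - move=> j _; rewrite ger0_norm ?enorm_ge0 // hv.
    have -> : vt (2 * phi j).+1 = a j by rewrite hvt.
    have tjE : enorm (a j) = u (2 * phi j)%N by rewrite /u /t hvt.
    rewrite tjE /ws -/b.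
    set tj := u (2 * phi j)%N.
    have tj0 : 0 < tj by apply: lt_le_trans t1 (tu _).
    have -> : tj^-1 *: a j - tau^-1 *: b = tj^-1 *: (a j - b) + (tj^-1 - tau^-1) *: b.
      by rewrite scalerBr scalerBl addrA subrK.
    apply: le_trans (enormD _ _) _; rewrite !enormZ /b E1.
    have -> : tj^-1 - tau^-1 = (tau - tj) / (tj * tau) by field; rewrite !gt_eqF.
    have e1 : `|tj^-1| = tj^-1 by rewrite ger0_norm // invr_ge0 ltW.
    have e2 : `|(tau - tj) / (tj * tau)| * tau = `|tj - tau| / tj.
      rewrite normrM normrV ?unitfE ?mulf_neq0 ?gt_eqF // normrM (gtr0_norm tj0) (gtr0_norm tau0) distrC.
      by field; rewrite !gt_eqF.
    have e3 : tj^-1 <= (u 0%N)^-1 by rewrite lef_pV2 ?posrE // tu.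
    rewrite e1 e2 mulrDr; apply: lerD; first by rewrite ler_wpM2r ?enorm_ge0.
    by rewrite [X in _ <= X]mulrC ler_wpM2l ?normr_ge0.
  - apply: lim0Z; apply: lim0D; first exact: C1.
    exact: lim0_abs (lim0_sub (fun j => le2 j) lu).
have ht2 : lim0 (fun j => enorm (pAv A (P (2 * phi j).+1) (v (2 * phi j).+1)) - tau).
  apply: (lim0_ext (a := fun j => u (2 * phi j).+1 - tau)); first by move=> j; rewrite /u /t hvt.
  exact: (lim0_sub (fun j => le3 j) lu).
have [E2 _] := core tau0 (fun j => hP (2 * phi j).+1) (fun j => nv _) ev2 ht2 hpw.
have nvs : enorm vs = 1.
  have h : lim0 (fun _ => 1 - enorm vs).
    apply: (lim0_le (a := fun j => enorm (v (2 * phi j)%N - vs)) (N0 := 0)) ev => j _.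
    rewrite -(nv (2 * phi j)%N); exact: enorm_rev.
  by have := lim0_const h; move/eqP; rewrite subr_eq0 => /eqP <-.
have [mpw spw _] := hpw.
have [mpv spv _] := hpv.
have wsE : pAv A pv vs = tau *: ws by rewrite /ws scalerA mulfV ?gt_eqF // scale1r.
have xE : pAv A (pw * pv) vs = tau *: pAv A pw ws by rewrite pAvM wsE pAvvZ.
have xv : dotv (pAv A (pw * pv) vs) vs = tau ^+ 2.
  rewrite xE dotvZl pAv_sym // -dotvZl -wsE dotvC (Ps_key hpv mpw spw) -enorm_sqr E1.
  by [].
have xx : dotv (pAv A (pw * pv) vs) (pAv A (pw * pv) vs) = tau ^+ 4.
  by rewrite {1}xE xE dotvZl dotvZr -enorm_sqr E2; ring.
have spp : size (pw * pv) = (2 * s).+1.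
  by rewrite size_Mmonic ?monic_neq0 // spw spv addSn /= addnS mul2n addnn.
have X0 : pAv A (pw * pv) vs - tau ^+ 2 *: vs = 0.
  apply: dotv_eq0; rewrite dotvBl !dotvBr !dotvZl !dotvZr (dotvC vs) xv xx -enorm_sqr nvs.
  ring.
split => //.
- rewrite ltnNge; apply/negP => g.
  have [r [mr sr hr]] := grade_annih A vs.
  have sr' : (size r <= s.+1)%N by rewrite sr ltnS.
  have [q [mq sq hq]] := mk_monic A (monic_neq0 mr) sr'.
  have := Ps_min hpv mq sq; rewrite hq // enorm0 E1 => h.
  by have := lt_le_trans tau0 h; rewrite ltxx.
- have sc : (size (- (tau ^+ 2)%:P)%R < size (pw * pv)%R)%N.
    rewrite spp size_opp size_polyC; apply: leq_ltn_trans (leq_b1 _) _.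
    by rewrite ltnS muln_gt0 s1.
  apply: (grade_le (q := pw * pv - (tau ^+ 2)%:P)).
  + by rewrite monicE lead_coefDl // lead_coefM (monicP mpw) (monicP mpv) mulr1.
  + by rewrite size_polyDl // spp.
  + by rewrite pAvB pAvC.
Qed.
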